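(* Let $K=\{p_1,\dots,p_N\}\subset\mathbb{R}^d$ be finite. Then: (i) $\eta$ is constant on each Voronoi cell, hence has finite range $\mathcal{E}$; (ii) $\{Q_\eta\}_{\eta\in\mathcal{E}}$ is a partition of $\mathbb{R}^d$, and $x\in Q_\eta$ if and only if $\nabla f(x)=\eta-x$; (iii) for every $\eta\in\mathcal{E}$, both $Q_\eta$ and $P_\eta$ are unions of Voronoi cells, and $Q_\eta\subseteq P_\eta$; (iv) for every $\eta\in\mathcal{E}$, $P_\eta$ is a polyhedron; (v) with $\beta:=\min\{|\eta-\bar\eta|^2:\eta,\bar\eta\in\mathcal{E},\eta\ne\bar\eta\}>0$, one has $|\bar\eta-x|^2\ge|\eta-x|^2+\beta$ for all distinct $\eta,\bar\eta\in\mathcal{E}$ and all $x\in Q_\eta\cap P_{\bar\eta}$.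
   Context: $K=\{p_1,\dots,p_N\}\subset\mathbb{R}^d$ consists of $N$ distinct points. $f(x):=-\tfrac12\operatorname{dist}_K(x)^2$, $g(x):=\max_{y\in K}(x\cdot y-\tfrac12|y|^2)$ (convex, with convex subdifferential $\partial g$). $\operatorname{opt}(x):=\{y\in K:|x-y|=\operatorname{dist}_K(x)\}$ and $\eta(x)$ is the orthogonal projection of $x$ onto $\operatorname{conv}(\operatorname{opt}(x))$. $\nabla f(x)$ is the minimal-norm element of $\partial f(x):=\{\xi: f(y)\ge f(x)+\xi\cdot(y-x)-\tfrac12|y-x|^2\ \forall y\}$. For $H\subseteq K$ the Voronoi cell is $V_H:=\{x:\operatorname{opt}(x)=H\}$. For $\eta\in\mathbb{R}^d$: $Q_\eta:=\{x:\eta(x)=\eta\}$ (potential zone) and $P_\eta:=\{x:\eta\in\partial g(x)\}$. A polyhedron is a nonempty closed convex set of the form $\bigcap_{j=1}^\ell\{x:T_j(x)\le0\}$ with $T_j$ affine. *)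

(* Defs.v *)
From HB Require Import structures.
From mathcomp Require Import all_boot all_order all_algebra.
From mathcomp Require Import all_classical all_reals all_analysis.
Set Implicit Arguments. Unset Strict Implicit. Unset Printing Implicit Defensive.
Import Order.TTheory GRing.Theory Num.Theory.
Import numFieldNormedType.Exports.
Local Open Scope classical_set_scope.
Local Open Scope ring_scope.

Section Defs.
Variables (R : realType) (d : nat).
Notation pt := 'rV[R]_d.

Definition dotp (x y : pt) : R := \sum_(i < d) x 0 i * y 0 i.
Definition sqn (x : pt) : R := dotp x x.

Variable K : seq pt.

(* dist_K(x)^2 = min_{y in K} |x - y|^2  (K is assumed nonempty in the theorem) *)
Definition distK2 (x : pt) : R :=
  \big[Num.min/sqn (x - head 0 K)]_(y <- K) sqn (x - y).

Definition fK (x : pt) : R := - (2^-1 * distK2 x).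

Definition gK (x : pt) : R :=
  \big[Num.max/(dotp x (head 0 K) - 2^-1 * sqn (head 0 K))]_(y <- K)
     (dotp x y - 2^-1 * sqn y).

Definition optK (x : pt) : set pt :=
  [set y | y \in K /\ sqn (x - y) = distK2 x].

Definition convK (S : set pt) : set pt :=
  [set z | exists lam : pt -> R,
     (forall y, 0 <= lam y) /\ (forall y, ~ S y -> lam y = 0) /\
     \sum_(y <- K) lam y = 1 /\ z = \sum_(y <- K) lam y *: y].

Definition is_proj (C : set pt) (x p : pt) : Prop :=
  C p /\ forall z, C z -> sqn (x - p) <= sqn (x - z).

Definition etaK (x : pt) : pt := xget 0 [set p | is_proj (convK (optK x)) x p].

(* semiconcave (proximal) superdifferential of f *)
Definition subdiff_f (x : pt) : set pt :=
  [set xi | forall y, fK y >= fK x + dotp xi (y - x) - 2^-1 * sqn (y - x)].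

Definition is_min_norm (S : set pt) (xi : pt) : Prop :=
  S xi /\ forall z, S z -> sqn xi <= sqn z.

Definition gradf (x : pt) : pt := xget 0 [set xi | is_min_norm (subdiff_f x) xi].

Definition subdiff_g (x : pt) : set pt :=
  [set xi | forall y, gK y >= gK x + dotp xi (y - x)].

Definition Vcell (H : set pt) : set pt := [set x | optK x = H].
Definition Qz (e : pt) : set pt := [set x | etaK x = e].
Definition Pz (e : pt) : set pt := [set x | subdiff_g x e].

End Defs.

Definition is_convex_set (R : realType) (d : nat) (S : set 'rV[R]_d) : Prop :=
  forall x y t, S x -> S y -> 0 <= t <= 1 -> S ((1 - t) *: x + t *: y).

Definition polyhedron (R : realType) (d : nat) (S : set 'rV[R]_d) : Prop :=
  S !=set0 /\ closed S /\ is_convex_set S /\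
  exists (l : nat) (a : 'I_l -> 'rV[R]_d) (b : 'I_l -> R),
    S = [set x | forall j, dotp (a j) x + b j <= 0].

(* Main.v *)
Require Import Defs.
From HB Require Import structures.
From mathcomp Require Import all_boot all_order all_algebra.
From mathcomp Require Import all_classical all_reals all_analysis.
From mathcomp Require Import ring lra.
Import Order.TTheory GRing.Theory Num.Theory.
Import numFieldNormedType.Exports.
Local Open Scope classical_set_scope.
Local Open Scope ring_scope.
Set Implicit Arguments. Unset Strict Implicit. Unset Printing Implicit Defensive.

Section Alg.
Variables (R : realType) (d : nat).
Notation pt := 'rV[R]_d.
Implicit Types x y z u v w : pt.

Lemma dotpC x y : dotp x y = dotp y x.
Proof. by apply: eq_bigr => i _; rewrite mulrC. Qed.

Lemma dotpDl x y z : dotp (x + y) z = dotp x z + dotp y z.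
Proof. by rewrite /dotp -big_split; apply: eq_bigr => i _; rewrite !mxE mulrDl. Qed.

Lemma dotpNl x z : dotp (- x) z = - dotp x z.
Proof. by rewrite /dotp -sumrN; apply: eq_bigr => i _; rewrite !mxE mulNr. Qed.

Lemma dotpBl x y z : dotp (x - y) z = dotp x z - dotp y z.
Proof. by rewrite dotpDl dotpNl. Qed.

Lemma dotpZl (a : R) x z : dotp (a *: x) z = a * dotp x z.
Proof. by rewrite /dotp mulr_sumr; apply: eq_bigr => i _; rewrite !mxE mulrA. Qed.

Lemma dotp0l z : dotp 0 z = 0.
Proof. by rewrite /dotp big1 // => i _; rewrite mxE mul0r. Qed.

Lemma dotpDr x y z : dotp z (x + y) = dotp z x + dotp z y.
Proof. by rewrite dotpC dotpDl !(dotpC z). Qed.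
Lemma dotpNr x z : dotp z (- x) = - dotp z x.
Proof. by rewrite dotpC dotpNl dotpC. Qed.
Lemma dotpBr x y z : dotp z (x - y) = dotp z x - dotp z y.
Proof. by rewrite dotpDr dotpNr. Qed.
Lemma dotpZr (a : R) x z : dotp z (a *: x) = a * dotp z x.
Proof. by rewrite dotpC dotpZl dotpC. Qed.

Lemma dotp_suml (I : Type) (s : seq I) (F : I -> pt) z :
  dotp (\sum_(i <- s) F i) z = \sum_(i <- s) dotp (F i) z.
Proof.
elim: s => [|a s IH]; first by rewrite !big_nil dotp0l.
by rewrite !big_cons dotpDl IH.
Qed.

Lemma sqn_ge0 x : 0 <= sqn x.
Proof. by rewrite /sqn /dotp sumr_ge0 // => i _; rewrite -expr2 sqr_ge0. Qed.

Lemma sqn_eq0 x : sqn x = 0 -> x = 0.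
Proof.
move=> H; apply/matrixP => i j; rewrite mxE (ord1 i).
have P0 : forall k, predT k -> 0 <= x 0 k * x 0 k by move=> k _; rewrite -expr2 sqr_ge0.
have := @psumr_eq0P R _ predT (fun j => x 0 j * x 0 j) P0 H j isT.
by move=> /eqP; rewrite mulf_eq0 orbb => /eqP.
Qed.

Lemma sqnE x : sqn x = dotp x x. Proof. by []. Qed.

End Alg.

Ltac dexp := rewrite ?sqnE ?(dotpDl, dotpDr, dotpBl, dotpBr, dotpNl, dotpNr, dotpZl, dotpZr).

Section Big.
Variables (R : realType) (T : eqType).

Lemma bigmin_le_seq (s : seq T) (F : T -> R) i0 y : y \in s ->
  \big[Num.min/i0]_(z <- s) F z <= F y.
Proof.
elim: s => [|a s IH] //; rewrite big_cons in_cons => /orP[/eqP->|/IH H].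
  by rewrite ge_min lexx.
by rewrite ge_min H orbT.
Qed.

Lemma bigmin_att (s : seq T) (F : T -> R) i0 :
  \big[Num.min/i0]_(z <- s) F z = i0 \/
  exists2 y, y \in s & \big[Num.min/i0]_(z <- s) F z = F y.
Proof.
elim: s => [|a s IH]; first by left; rewrite big_nil.
rewrite big_cons; move: IH; set B := \big[_/_]_(z <- s) _ => IH.
have [h|h] := lerP (F a) B.
  by right; exists a; rewrite ?mem_head // min_l.
case: IH => [->|[y ys ->]]; first by left.
by right; exists y => //; rewrite in_cons ys orbT.
Qed.

Lemma bigmax_ge_seq (s : seq T) (F : T -> R) i0 y : y \in s ->
  F y <= \big[Num.max/i0]_(z <- s) F z.
Proof.
elim: s => [|a s IH] //; rewrite big_cons in_cons => /orP[/eqP->|/IH H].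
  by rewrite le_max lexx.
by rewrite le_max H orbT.
Qed.

Lemma bigmax_att (s : seq T) (F : T -> R) i0 :
  \big[Num.max/i0]_(z <- s) F z = i0 \/
  exists2 y, y \in s & \big[Num.max/i0]_(z <- s) F z = F y.
Proof.
elim: s => [|a s IH]; first by left; rewrite big_nil.
rewrite big_cons; move: IH; set B := \big[_/_]_(z <- s) _ => IH.
have [h|h] := lerP B (F a).
  by right; exists a; rewrite ?mem_head // max_l.
case: IH => [->|[y ys ->]]; first by left.
by right; exists y => //; rewrite in_cons ys orbT.
Qed.

Lemma sum_delta (V : nmodType) (s : seq T) (F : T -> V) p : uniq s -> p \in s ->
  \sum_(y <- s) (if y == p then F y else 0) = F p.
Proof.
elim: s => [|a s IH] //=; rewrite in_cons big_cons => /andP[an us] /orP[/eqP->|ps].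
  rewrite eqxx big1_seq ?addr0 // => y /andP[_ ys].
  by case: eqP => // yp; move: an; rewrite -yp ys.
rewrite IH //; case: eqP => [ap|]; last by rewrite add0r.
by move: an; rewrite ap ps.
Qed.

Lemma small_t (s : seq T) (P : T -> R -> Prop) :
  (forall p, p \in s -> exists2 t0, 0 < t0 & forall t, 0 < t <= t0 -> P p t) ->
  exists2 t0, 0 < t0 & forall p, p \in s -> forall t, 0 < t <= t0 -> P p t.
Proof.
elim: s => [|a s IH] H; first by exists 1.
have [|t1 t10 H1] := IH; first by move=> p ps; apply: H; rewrite in_cons ps orbT.
have [t2 t20 H2] := H a (mem_head _ _).
exists (Num.min t1 t2); first by rewrite lt_min t10 t20.
move=> p; rewrite in_cons => /orP[/eqP->|ps] t /andP[t0 tm]; move: tm; rewrite le_min => /andP[h1 h2].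
  by apply: H2; rewrite t0 h2.
by apply: H1; rewrite // t0 h1.
Qed.

End Big.

Section Geo.
Variables (R : realType) (d : nat) (K : seq 'rV[R]_d).
Hypothesis HK0 : K != [::].
Notation pt := 'rV[R]_d.
Implicit Types x y z u v w p : pt.

Definition ap p x := dotp x p - 2^-1 * sqn p.

Lemma headK : head 0 K \in K.
Proof. by case: K HK0 => // a s _; rewrite mem_head. Qed.

Lemma distK2_le x y : y \in K -> distK2 K x <= sqn (x - y).
Proof. exact: bigmin_le_seq. Qed.

Lemma distK2_ex x : exists2 y, y \in K & distK2 K x = sqn (x - y).
Proof.
case: (bigmin_att K (fun y => sqn (x - y)) (sqn (x - head 0 K))) => [H|[y yK H]].
  by exists (head 0 K); rewrite ?headK.
by exists y.
Qed.

Lemma gK_ge x y : y \in K -> ap y x <= gK K x.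
Proof. exact: bigmax_ge_seq. Qed.

Lemma gK_ex x : exists2 y, y \in K & gK K x = ap y x.
Proof.
case: (bigmax_att K (fun y => dotp x y - 2^-1 * sqn y) (dotp x (head 0 K) - 2^-1 * sqn (head 0 K))) => [H|[y yK H]].
  by exists (head 0 K); rewrite ?headK.
by exists y.
Qed.

Lemma ap_sqn p x : ap p x = 2^-1 * sqn x - 2^-1 * sqn (x - p).
Proof. rewrite /ap; dexp; have h1 := dotpC x p; lra. Qed.

Lemma gK_distK2 x : gK K x = 2^-1 * sqn x - 2^-1 * distK2 K x.
Proof.
have [p pK E] := gK_ex x; have [q qK eq] := distK2_ex x.
have h1 := gK_ge x qK; have h2 := distK2_le x pK.
rewrite E !ap_sqn in h1 *; apply/eqP; rewrite eq_le; apply/andP; split; lra.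
Qed.

Lemma fK_gK x : fK K x = gK K x - 2^-1 * sqn x.
Proof. rewrite /fK gK_distK2; lra. Qed.

Lemma opt_ap x p : optK K x p <-> p \in K /\ ap p x = gK K x.
Proof.
rewrite /optK /= gK_distK2 ap_sqn; split => -[pK H]; split => //; first by rewrite H.
lra.
Qed.

Lemma ap_shift p x y : ap p y = ap p x + dotp p (y - x).
Proof. rewrite /ap; dexp; have h1 := dotpC x p; have h2 := dotpC y p; lra. Qed.

Lemma opt_ex x : exists p, optK K x p.
Proof. have [p pK H] := distK2_ex x; by exists p. Qed.

End Geo.

Section Proj.
Variables (R : realType) (d : nat) (K : seq 'rV[R]_d).
Hypothesis HK0 : K != [::].
Hypothesis HKu : uniq K.
Notation pt := 'rV[R]_d.
Implicit Types x y z u v w p : pt.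

Lemma sqnBZ u w (s : R) : sqn (u - s *: w) = sqn u - 2 * s * dotp u w + s ^+ 2 * sqn w.
Proof. dexp; rewrite (dotpC w u); ring. Qed.

Lemma sqnB u w : sqn (u - w) = sqn u - 2 * dotp u w + sqn w.
Proof. dexp; rewrite (dotpC w u); ring. Qed.

Lemma sqnD u w : sqn (u + w) = sqn u + 2 * dotp u w + sqn w.
Proof. dexp; rewrite (dotpC w u); ring. Qed.

Lemma conv_pt (S : set pt) p : S p -> p \in K -> convK K S p.
Proof.
move=> Sp pK; exists (fun y => if y == p then 1 else 0); split.
  by move=> y; case: eqP.
split; first by move=> y Sy; case: eqP => // yp; rewrite yp in Sy.
split; first by rewrite (sum_delta (fun _ => (1:R))).
rewrite (eq_bigr (fun y => if y == p then y else 0)).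
  by rewrite (sum_delta (fun y => y)).
by move=> y _; case: eqP => _; rewrite ?scale1r ?scale0r.
Qed.

Lemma conv_convex (S : set pt) z1 z2 t : convK K S z1 -> convK K S z2 ->
  0 <= t <= 1 -> convK K S ((1 - t) *: z1 + t *: z2).
Proof.
move=> [l1 [l10 [l1S [l1s ->]]]] [l2 [l20 [l2S [l2s ->]]]] /andP[t0 t1].
exists (fun y => (1 - t) * l1 y + t * l2 y); split.
  by move=> y; rewrite addr_ge0 // mulr_ge0 // subr_ge0.
split; first by move=> y Sy; rewrite l1S // l2S // !mulr0 addr0.
split; first by rewrite big_split /= -!mulr_sumr l1s l2s; ring.
rewrite !scaler_sumr -big_split /=; apply: eq_bigr => y _.
by rewrite !scalerA -scalerDl.
Qed.

Lemma proj_var (S : set pt) x p z : is_proj (convK K S) x p -> convK K S z ->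
  dotp (x - p) (z - p) <= 0.
Proof.
move=> [Cp Hmin] Cz; rewrite leNgt; apply/negP => a0.
set a := dotp (x - p) (z - p) in a0; set b := sqn (z - p).
have b0 : 0 <= b by apply: sqn_ge0.
set s := Num.min 1 (a / (b + 1)).
have s0 : 0 < s by rewrite lt_min ltr01 divr_gt0 //; lra.
have s1 : s <= 1 by rewrite ge_min lexx.
have s2 : s * (b + 1) <= a.
  by rewrite -ler_pdivlMr; [rewrite ge_min lexx orbT|lra].
have st : 0 <= s <= 1 by rewrite (ltW s0) s1.
have H := Hmin _ (conv_convex Cp Cz st).
have e : x - ((1 - s) *: p + s *: z) = (x - p) - s *: (z - p).
  by apply/matrixP => i j; rewrite !mxE; ring.
rewrite e sqnBZ in H.
have h3 : 2 * a <= s * b.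
  have h4 : s * (2 * a) <= s * (s * b) by rewrite -/a -/b in H; nra.
  by rewrite -(ler_pM2l s0).
nra.
Qed.

Lemma proj_uniq (S : set pt) x p1 p2 : is_proj (convK K S) x p1 ->
  is_proj (convK K S) x p2 -> p1 = p2.
Proof.
move=> H1 H2; have h1 := proj_var H1 H2.1; have h2 := proj_var H2 H1.1.
have h3 : sqn (p2 - p1) <= 0.
  move: h1 h2; dexp => h1 h2; have e1 := dotpC p1 p2; have e2 := dotpC p1 x; have e3 := dotpC p2 x; lra.
have h4 : sqn (p2 - p1) = 0 by apply/eqP; rewrite eq_le h3 sqn_ge0.
have := sqn_eq0 h4.
by move/eqP; rewrite subr_eq0 => /eqP.
Qed.

Lemma conv_dot (S : set pt) z w c : convK K S z ->
  (forall h, S h -> dotp h w = c) -> dotp z w = c.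
Proof.
move=> [l [l0 [lS [ls ->]]]] Hc; rewrite dotp_suml.
rewrite (eq_bigr (fun y => l y * c)); first by rewrite -mulr_suml ls mul1r.
move=> y _; rewrite dotpZl; case: (pselect (S y)) => Sy; first by rewrite Hc.
by rewrite lS // !mul0r.
Qed.

Lemma sum_nthK (V : nmodType) (F : pt -> V) :
  \sum_(y <- K) F y = \sum_(i < size K) F (nth 0 K i).
Proof. by rewrite (big_nth 0) big_mkord. Qed.

Definition Lset (S : set pt) : set 'rV[R]_(size K) :=
  \bigcap_(i in [set: 'I_(size K)])
     ([set l | 0 <= l ord0 i] `&` [set l | ~ S (nth 0 K i) -> l ord0 i = 0])
  `&` [set l | \sum_(i < size K) l ord0 i = 1].

Definition comb (l : 'rV[R]_(size K)) : pt := \sum_(i < size K) l ord0 i *: nth 0 K i.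

Lemma Lset_conv (S : set pt) l : Lset S l -> convK K S (comb l).
Proof.
move=> [/= Hi Hs].
exists (fun y => \sum_(i < size K | nth 0 K i == y) l ord0 i); split.
  by move=> y; apply: sumr_ge0 => i _; case: (Hi i I).
split.
  by move=> y Sy; apply: big1 => i /eqP ey; case: (Hi i I) => _; apply; rewrite ey.
have key : forall j : 'I_(size K),
    \sum_(i < size K | nth 0 K i == nth 0 K j) l ord0 i = l ord0 j.
  move=> j; apply: big_pred1 => i /=.
  by rewrite nth_uniq // -val_eqE.
split.
  by rewrite sum_nthK -Hs; apply: eq_bigr => j _; rewrite key.
by rewrite sum_nthK /comb; apply: eq_bigr => j _; rewrite key.
Qed.

Lemma conv_Lset (S : set pt) z : convK K S z -> exists2 l, Lset S l & comb l = z.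
Proof.
move=> [lam [l0 [lS [ls ->]]]].
exists (\row_(i < size K) lam (nth 0 K i)).
  split; last by rewrite /= -ls sum_nthK; apply: eq_bigr => i _; rewrite mxE.
  by move=> i _; split => /=; rewrite mxE //; apply: lS.
by rewrite /comb sum_nthK; apply: eq_bigr => i _; rewrite mxE.
Qed.

End Proj.
Arguments Lset {R d} K S _. Arguments comb {R d} K l.
Section Topo.
Variable R : realType.

Lemma cont_sum (T : topologicalType) (V : normedModType R) (I : Type) (s : seq I)
  (F : I -> T -> V) : (forall i, continuous (F i)) ->
  continuous (fun t => \sum_(i <- s) F i t).
Proof.
move=> HF; elim: s => [|a s IH].
  have -> : (fun t => \sum_(i <- [::]) F i t) = (fun _ => 0).
    by apply: funext => t; rewrite big_nil.
  exact: cst_continuous.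
have -> : (fun t => \sum_(i <- a :: s) F i t) = (F a + (fun t => \sum_(i <- s) F i t)).
  by apply: funext => t; rewrite big_cons.
by move=> t; apply: continuousD; [apply: HF|apply: IH].
Qed.

Lemma dotp_cont (d : nat) (a : 'rV[R]_d) : continuous (fun x => dotp a x).
Proof.
rewrite /dotp; apply: (@cont_sum _ R^o) => i x.
by apply: continuousM; [exact: cst_continuous|exact: coord_continuous].
Qed.

Lemma sqn_cont (d : nat) : continuous (fun x : 'rV[R]_d => sqn x).
Proof.
rewrite /sqn /dotp; apply: (@cont_sum _ R^o) => i x.
by apply: continuousM; exact: coord_continuous.
Qed.

End Topo.

Section Exist.
Variables (R : realType) (d : nat) (K : seq 'rV[R]_d).
Hypothesis HKu : uniq K.
Notation pt := 'rV[R]_d.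

Lemma Lset_closed (S : set pt) : closed (Lset K S).
Proof.
apply: closedI.
  apply: closed_bigI => i _; apply: closedI.
    apply: (preimage_closed (f := fun l : 'rV[R]_(size K) => l ord0 i) (D := [set r : R | 0 <= r])).
      by move=> ? _; exact: coord_continuous.
    exact: closed_ge.
  apply: (preimage_closed (f := fun l : 'rV[R]_(size K) => l ord0 i)
            (D := [set r : R | ~ S (nth 0 K i) -> r = 0])).
    by move=> ? _; exact: coord_continuous.
  case: (pselect (S (nth 0 K i))) => Si.
    have -> : [set r : R | ~ S (nth 0 K i) -> r = 0] = setT.
      by apply/seteqP; split => r //= _.
    exact: closedT.
  have -> : [set r : R | ~ S (nth 0 K i) -> r = 0] = [set r | r = 0].
    by apply/seteqP; split => r /=; [apply|move=> ->].
  exact: closed_eq.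
apply: (preimage_closed (f := fun l : 'rV[R]_(size K) => \sum_(i < size K) l ord0 i)
          (D := [set r : R | r = 1])).
  move=> ? _; apply: (@cont_sum _ _ R^o) => i; exact: coord_continuous.
exact: closed_eq.
Qed.

Lemma Lset_box (S : set pt) :
  Lset K S `<=` [set v | forall i, `[(0:R), 1]%classic (v ord0 i)].
Proof.
move=> l [/= Hi Hs] i; rewrite /= in_itv /=.
have [l0 _] := Hi i I; rewrite l0 /= -Hs (bigD1 i) //= lerDl.
by apply: sumr_ge0 => j _; case: (Hi j I).
Qed.

Lemma proj_ex (S : set pt) x : (exists p, S p /\ p \in K) ->
  exists p, is_proj (convK K S) x p.
Proof.
move=> [p0 [Sp0 p0K]].
have [l0 Ll0 _] := conv_Lset (conv_pt HKu Sp0 p0K).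
have cL : compact (Lset K S).
  have h1 := (@rV_compact _ (size K) (fun=> `[(0:R), 1]%classic) (fun=> @segment_compact R 0 1)).
  have h2 := @Lset_closed S. have h3 := @Lset_box S.
  exact: (subclosed_compact h2 h1 h3).
have phic : continuous (fun l : 'rV[R]_(size K) => sqn (x - comb K l)).
  move=> l; change {for l, continuous ((fun z : pt => sqn z) \o (fun l => x - comb K l))}.
  apply: continuous_comp; last exact: sqn_cont.
  apply: continuousB; first exact: cst_continuous.
  apply: cont_sum => i; move=> l'; apply: continuousZr_tmp; exact: coord_continuous.
have [c cL' cmin] := EVT_min_rV (ex_intro _ l0 Ll0) cL (continuous_subspaceT phic).
exists (comb K c); split; first by apply: Lset_conv; rewrite inE in cL'.
move=> z Cz; have [l Ll <-] := conv_Lset Cz; apply: cmin; rewrite inE.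
exact: Ll.
Qed.

End Exist.

Section Main.
Variables (R : realType) (d : nat) (K : seq 'rV[R]_d).
Hypothesis HK0 : K != [::].
Hypothesis HKu : uniq K.
Notation pt := 'rV[R]_d.
Implicit Types x y z u v w p e : pt.

Lemma eta_proj x : is_proj (convK K (optK K x)) x (etaK K x).
Proof.
rewrite /etaK; apply: xgetPex; apply: (proj_ex HKu).
have [p Hp] := opt_ex HK0 x; exists p; split => //; exact: Hp.1.
Qed.

Lemma eta_eq x p : is_proj (convK K (optK K x)) x p -> etaK K x = p.
Proof. move=> H; exact: proj_uniq (eta_proj x) H. Qed.

Lemma subg_char x e : subdiff_g K x e <->
  forall v, exists2 p, optK K x p & dotp e v <= dotp p v.
Proof.
split; last first.
  move=> H y; have [p Hp ep] := H (y - x).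
  have [pK eq] := (opt_ap HK0 x p).1 Hp.
  have h1 := gK_ge y pK; rewrite (ap_shift p x y) eq in h1; lra.
move=> Hs v; apply: contrapT => Hn.
have Hlt : forall p, optK K x p -> dotp p v < dotp e v.
  move=> p Hp; rewrite ltNge; apply/negP => h; apply: Hn; by exists p.
pose P := fun p (t : R) => t * (dotp p v - dotp e v) < gK K x - ap p x.
have [t0 t00 Ht] : exists2 t0, 0 < t0 & forall p, p \in K -> forall t, 0 < t <= t0 -> P p t.
  apply: small_t => p pK.
  case: (pselect (optK K x p)) => Hp.
    exists 1 => // t /andP[t0 _]; rewrite /P.
    have [_ eq] := (opt_ap HK0 x p).1 Hp; rewrite eq subrr.
    have := Hlt p Hp; nra.
  have c0 : 0 < gK K x - ap p x.
    have h := gK_ge x pK; rewrite lt_neqAle subr_ge0 h andbT eq_sym subr_eq0.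
    apply/negP => /eqP h'; apply: Hp; apply/(opt_ap HK0 x p); split => //.
  set w := dotp p v - dotp e v; set c := gK K x - ap p x in c0 *.
  exists (c / (1 + `|w|)); first by rewrite divr_gt0 // ltr_pwDl.
  move=> t /andP[t0 tc]; rewrite /P -/w -/c.
  have h1 : t * (1 + `|w|) <= c by rewrite -ler_pdivlMr // ltr_pwDl.
  have h2 : w <= `|w| := ler_norm w.
  nra.
have [q qK eq] := gK_ex HK0 (x + t0 *: v).
have H := Hs (x + t0 *: v); rewrite eq (ap_shift q x) in H.
have := Ht q qK t0; rewrite /P lexx t00 => /(_ isT).
move: H; dexp => H H'; lra.
Qed.

Lemma mainM x xi : subdiff_g K x xi ->
  sqn (xi - x) >= sqn (etaK K x - x) + sqn (xi - etaK K x).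
Proof.
move=> /subg_char /(_ (x - etaK K x)) [p Hp h].
have h2 := proj_var (eta_proj x) (conv_pt HKu Hp Hp.1).
set e := etaK K x in h h2 *.
move: h h2; dexp => h h2.
have e1 := dotpC xi x; have e2 := dotpC xi e; have e3 := dotpC xi p;
have e4 := dotpC x e; have e5 := dotpC x p; have e6 := dotpC e p.
lra.
Qed.

Lemma eta_subg x : subdiff_g K x (etaK K x).
Proof.
have [lam [l0 [lS [ls ee]]]] := (eta_proj x).1.
move=> y; rewrite ee.
have -> : gK K x + dotp (\sum_(y0 <- K) lam y0 *: y0) (y - x) =
          \sum_(y0 <- K) lam y0 * (gK K x + dotp y0 (y - x)).
  rewrite (eq_bigr (fun y0 => lam y0 * gK K x + lam y0 * dotp y0 (y - x)));
    last by move=> i _; rewrite mulrDr.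
  rewrite big_split /= -mulr_suml ls mul1r dotp_suml; congr (_ + _).
  by apply: eq_bigr => i _; rewrite dotpZl.
rewrite -[leRHS]mul1r -ls mulr_suml; apply: ler_sum => y0 _.
case: (pselect (optK K x y0)) => H; last by rewrite lS // !mul0r.
apply: ler_wpM2l => //; have [_ eq] := (opt_ap HK0 x y0).1 H.
by rewrite -eq -ap_shift; apply: gK_ge; case: H.
Qed.

Lemma subf_g x xi : subdiff_f K x xi <-> subdiff_g K x (xi + x).
Proof.
split => H y; have := H y; rewrite !(fK_gK HK0); dexp => h;
  have e1 := dotpC x y; have e2 := dotpC xi y; have e3 := dotpC xi x; lra.
Qed.

Lemma gradf_eq x : gradf K x = etaK K x - x.
Proof.
set e := etaK K x.
have Hm : is_min_norm (subdiff_f K x) (e - x).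
  split; first by apply/subf_g; rewrite subrK; apply: eta_subg.
  move=> z /subf_g /mainM; rewrite addrK -/e => h.
  have := sqn_ge0 (z + x - e); lra.
have : is_min_norm (subdiff_f K x) (gradf K x).
  by rewrite /gradf; apply: xgetPex; exists (e - x).
move=> [/subf_g /mainM h1 h2]; have h3 := h2 _ Hm.1.
rewrite addrK -/e in h1.
have h4 : sqn (gradf K x + x - e) = 0.
  by apply/eqP; rewrite eq_le sqn_ge0 andbT; lra.
have /eqP := sqn_eq0 h4; rewrite subr_eq0 => /eqP <-; by rewrite addrK.
Qed.

Lemma eta_const x y : optK K x = optK K y -> etaK K x = etaK K y.
Proof.
move=> Hxy; apply/esym/eta_eq; rewrite -Hxy.
have [Ce Hmin] := eta_proj x; split => // z Cz.
set c := 2^-1 * (sqn y - sqn x - distK2 K y + distK2 K x).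
have Hc : forall h, optK K x h -> dotp h (y - x) = c.
  move=> h Hh; have Hh' : optK K y h by rewrite -Hxy.
  case: Hh => _ h1; case: Hh' => _ h2; rewrite /c -h1 -h2.
  dexp; have e1 := dotpC x h; have e2 := dotpC y h; lra.
have hz := conv_dot Cz Hc; have he := conv_dot Ce Hc.
have := Hmin z Cz; move: hz he; set e := etaK K x; dexp => hz he hm.
have e1 := dotpC x y; have e2 := dotpC x z; have e3 := dotpC y z;
have e4 := dotpC x e; have e5 := dotpC y e; lra.
Qed.

End Main.

Section Final.
Variables (R : realType) (d : nat) (K : seq 'rV[R]_d).
Hypothesis HK0 : K != [::].
Hypothesis HKu : uniq K.
Notation pt := 'rV[R]_d.
Implicit Types x y z u v w p e : pt.

Definition Sx x : {set 'I_(size K)} := [set i : 'I_(size K) | sqn (x - nth 0 K i) == distK2 K x].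

Lemma Sx_opt x y : Sx x = Sx y -> optK K x = optK K y.
Proof.
move=> Hs; apply/seteqP; split => p [pK h]; split => //.
  have hi : (index p K < size K)%N by rewrite index_mem.
  have := congr1 (fun S : {set 'I_(size K)} => Ordinal hi \in S) Hs; rewrite !inE /= nth_index // h eqxx.
  by move/esym/eqP.
have hi : (index p K < size K)%N by rewrite index_mem.
have := congr1 (fun S : {set 'I_(size K)} => Ordinal hi \in S) Hs; rewrite !inE /= nth_index // h eqxx.
by move/eqP.
Qed.

Lemma E_finite : finite_set (range (etaK K)).
Proof.
pose G := fun S : {set 'I_(size K)} => etaK K (xget 0 [set x | Sx x = S]).
apply: (sub_finite_set (B := G @` setT)); last first.
  by apply: finite_image; exact: finite_finset.
move=> e [x _ <-]; exists (Sx x) => //; rewrite /G.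
have : Sx (xget 0 [set x' | Sx x' = Sx x]) = Sx x.
  exact: (@xgetPex _ 0 [set x' | Sx x' = Sx x] (ex_intro _ x erefl)).
by move/Sx_opt/(eta_const HK0 HKu).
Qed.

Lemma Pz_opt e x y : optK K x = optK K y -> Pz K e x -> Pz K e y.
Proof.
move=> Hxy; rewrite /Pz /= !(subg_char HK0) => H v; rewrite -Hxy; exact: H.
Qed.

Lemma Pz_poly e : range (etaK K) e -> polyhedron (Pz K e).
Proof.
move=> [x0 _ ex0].
have Px0 : Pz K e x0 by rewrite /Pz /= -ex0; apply: eta_subg.
set m := gK K x0 - dotp e x0.
pose a := fun j : 'I_(size K) => nth 0 K j - e.
pose b := fun j : 'I_(size K) => - (2^-1 * sqn (nth 0 K j)) - m.
have rep : Pz K e = [set x | forall j, dotp (a j) x + b j <= 0].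
  apply/seteqP; split => x /= Hx.
    move=> j; have h1 := Hx x0; have h2 := gK_ge x (mem_nth 0 (ltn_ord j)).
    rewrite /a /b /m; move: h1 h2; rewrite /ap; dexp => h1 h2.
    have e1 := dotpC x (nth 0 K j); have e2 := dotpC e x; have e3 := dotpC e x0; lra.
  have hx : gK K x - dotp e x <= m.
    have [q qK eq] := gK_ex HK0 x.
    have hi : (index q K < size K)%N by rewrite index_mem.
    have := Hx (Ordinal hi); rewrite /a /b /= nth_index // eq /ap.
    dexp => h; have e1 := dotpC x q; lra.
  move=> y; have := Px0 y; move: hx; rewrite /m; dexp => h1 h2.
  have e1 := dotpC e x; have e2 := dotpC e y; have e3 := dotpC e x0; lra.
split; first by exists x0.
split.
  rewrite rep.
  have -> : [set x | forall j, dotp (a j) x + b j <= 0] =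
            \bigcap_(j in [set: 'I_(size K)]) [set x | dotp (a j) x + b j <= 0].
    by apply/seteqP; split => x /= H j; [move=> _; apply: H|apply: H].
  apply: closed_bigI => j _.
  apply: (preimage_closed (f := fun x : pt => dotp (a j) x + b j) (D := [set r : R | r <= 0])).
    by move=> x _; apply: continuousD; [apply: dotp_cont|apply: cst_continuous].
  exact: closed_le.
split; last by exists (size K), a, b.
rewrite rep => x y t /= Hx Hy /andP[t0 t1] j.
have h1 := Hx j; have h2 := Hy j; move: h1 h2; dexp => h1 h2.
nra.
Qed.

End Final.

Theorem proposition3p5 (R : realType) (d : nat) (K : seq 'rV[R]_d)
  (HK0 : K != [::]) (HKu : uniq K) :
  let E := range (etaK K) in
  (* (i) *)
  (forall (H : set 'rV[R]_d) x y, H `<=` [set p | p \in K] ->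
      Vcell K H x -> Vcell K H y -> etaK K x = etaK K y) /\
  finite_set E /\
  (* (ii) *)
  ((forall x, exists2 e, E e & Qz K e x) /\
   (forall e e', E e -> E e' -> e <> e' -> Qz K e `&` Qz K e' = set0) /\
   (forall e, E e -> Qz K e !=set0) /\
   (forall e x, E e -> (Qz K e x <-> gradf K x = e - x))) /\
  (* (iii) *)
  (forall e, E e ->
     (exists2 Hs : set (set 'rV[R]_d),
        (forall H, Hs H -> H `<=` [set p | p \in K]) &
        Qz K e = \bigcup_(H in Hs) Vcell K H) /\
     (exists2 Hs : set (set 'rV[R]_d),
        (forall H, Hs H -> H `<=` [set p | p \in K]) &
        Pz K e = \bigcup_(H in Hs) Vcell K H) /\
     Qz K e `<=` Pz K e) /\
  (* (iv) *)
  (forall e, E e -> polyhedron (Pz K e)) /\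
  (* (v) *)
  (forall beta : R,
     let D := [set t : R | exists e, exists e',
                 [/\ E e, E e', e <> e' & t = sqn (e - e')]] in
     D beta -> (forall t, D t -> beta <= t) ->
     0 < beta /\
     (forall e e' x, E e -> E e' -> e <> e' -> Qz K e x -> Pz K e' x ->
        sqn (e' - x) >= sqn (e - x) + beta)).
Proof.
move=> E.
split.
  move=> H x y _ Hx Hy; apply: (eta_const HK0 HKu); by rewrite Hx Hy.
split; first exact: E_finite.
split.
  split; first by move=> x; exists (etaK K x) => //; exists x.
  split.
    move=> e e' _ _ ne; apply/seteqP; split => x // [h1 h2]; apply: ne.
    by rewrite -h1 -h2.
  split; first by move=> e [x _ <-]; exists x.
  move=> e x _; rewrite (gradf_eq HK0 HKu) /Qz /=; split => [->//|].
  by move/eqP; rewrite subr_eq addrNK => /eqP.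
split.
  move=> e Ee; split.
    exists [set H | exists2 x, Qz K e x & H = optK K x].
      by move=> H [x _ ->] p [].
    apply/seteqP; split => x.
      by move=> Hx; exists (optK K x) => //; exists x.
    move=> [H [x0 Hx0 ->] Hx]; rewrite /Qz /= -Hx0; apply: (eta_const HK0 HKu).
    exact: Hx.
  split.
    exists [set H | exists2 x, Pz K e x & H = optK K x].
      by move=> H [x _ ->] p [].
    apply/seteqP; split => x.
      by move=> Hx; exists (optK K x) => //; exists x.
    move=> [H [x0 Hx0 ->] Hx]; apply: Pz_opt Hx0; exact: esym.
  by move=> x Hx; rewrite /Pz /= -Hx; apply: eta_subg.
split; first by move=> e Ee; apply: Pz_poly.
move=> beta D Db Dmin; split.
  case: Db => e [e' [_ _ ne ->]].
  rewrite lt_neqAle sqn_ge0 andbT eq_sym; apply/eqP => h.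
  by apply: ne; apply/eqP; rewrite -subr_eq0; apply/eqP; apply: sqn_eq0.
move=> e e' x Ee Ee' ne Hq Hp.
have := mainM HK0 HKu Hp; rewrite Hq => h.
have := Dmin (sqn (e' - e)); rewrite /D /= => /(_ _) h2.
have h3 : beta <= sqn (e' - e) by apply: h2; exists e', e; split => //; exact: nesym.
rewrite (_ : e - x = - (x - e)) in h *; last by rewrite opprB.
lra.
Qed.
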